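(* Let $F=\breve F(\alpha_1,\dots,\alpha_t)$ be a fence with shared elements $s_1,\dots,s_{t-1}$. Then the set $X=\{\chi_{s_i}: 1\le i\le t-1\}$ is linearly independent and $\operatorname{Span}_{\mathbb R}(X)\cap A_T(F)=\{0\}$.
   Context: Fences: let $\alpha=(\alpha_1,\dots,\alpha_t)$ be positive integers with $t\ge2$ and $\alpha_1,\alpha_t\ge2$. Put $a_0=0$, $a_i=\alpha_1+\dots+\alpha_i$, $n=a_t-1$. The fence $\breve F(\alpha)$ is the poset on $\{x_1,\dots,x_n\}$ whose cover relations are: for $1\le j\le n-1$ with $a_{i-1}\le j<a_i$, $x_j\lessdot x_{j+1}$ if $i$ is odd and $x_j\gtrdot x_{j+1}$ if $i$ is even. The shared elements are $s_i=x_{a_i}$, $i\in[t-1]$. $\mathcal J(F)$ is the set of order ideals. For $q\in F$, $I\in\mathcal J(F)$: $\chi_q(I)=1$ if $q\in\max(I)$, else $0$; $T_q(I)=1$ if $q\in\min(F\setminus I)$, $-1$ if $q\in\max(I)$, $0$ otherwise. For $f:\mathcal J(F)\to\mathbb R$, write $f\equiv\text{const}$ if $f=c+\sum_{q\in F}c_qT_q$ for some real constants $c,c_q$. The antichain toggleability space is $A_T(F)=\{f\in\operatorname{Span}_{\mathbb R}\{\chi_q:q\in F\}: f\equiv\text{const}\}$. *)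

(* Defs.v *)
From HB Require Import structures.
From mathcomp Require Import all_boot all_order all_algebra.
From mathcomp Require Import reals.
Set Implicit Arguments. Unset Strict Implicit. Unset Printing Implicit Defensive.
Import Order.TTheory GRing.Theory Num.Theory.

Section Fence.
Variable alpha : seq nat.

(* t = size alpha, alpha_i = nth 0 alpha (i-1) *)
Definition tlen : nat := size alpha.
Definition apart (k : nat) : nat := \sum_(l < k) nth 0 alpha l.
(* n = a_t - 1 ; the fence elements x_1..x_n are the ordinals 0..n-1
   (ordinal u stands for x_{u+1}) *)
Definition fn : nat := (apart tlen).-1.

(* segment index i of a 1-based position j with a_{i-1} <= j < a_i *)
Definition seg (j : nat) : nat := (count (fun k => apart k <= j) (iota 1 tlen)).+1.
(* x_j <. x_{j+1} iff the segment index of j is odd *)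
Definition up (j : nat) : bool := odd (seg j).

Definition cov : rel 'I_fn := fun x y =>
  ((val y == (val x).+1) && up (val x).+1) ||
  ((val x == (val y).+1) && ~~ up (val y).+1).

Definition fle (x y : 'I_fn) : bool := connect cov x y.
Definition flt (x y : 'I_fn) : bool := (x != y) && fle x y.

Definition is_ideal (I : {set 'I_fn}) : Prop :=
  forall x y, y \in I -> fle x y -> x \in I.

Definition in_max (I : {set 'I_fn}) (q : 'I_fn) : bool :=
  (q \in I) && [forall r, (r \in I) ==> ~~ flt q r].
Definition in_min_compl (I : {set 'I_fn}) (q : 'I_fn) : bool :=
  (q \notin I) && [forall r, (r \notin I) ==> ~~ flt r q].

Definition shared (q : 'I_fn) : bool :=
  has (fun i => (val q).+1 == apart i) (iota 1 tlen.-1).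

Variable R : realType.
Local Open Scope ring_scope.

Definition chi (q : 'I_fn) (I : {set 'I_fn}) : R :=
  if in_max I q then 1 else 0.
Definition Tog (q : 'I_fn) (I : {set 'I_fn}) : R :=
  if in_min_compl I q then 1 else if in_max I q then -1 else 0.

(* functions J(F) -> R are represented by {set 'I_fn} -> R, compared only on ideals *)
Definition toggle_const (f : {set 'I_fn} -> R) : Prop :=
  exists (c : R) (cq : 'I_fn -> R), forall I, is_ideal I ->
    f I = c + \sum_q cq q * Tog q I.

Definition in_span_chi (f : {set 'I_fn} -> R) : Prop :=
  exists b : 'I_fn -> R, forall I, is_ideal I -> f I = \sum_q b q * chi q I.

Definition in_AT (f : {set 'I_fn} -> R) : Prop := in_span_chi f /\ toggle_const f.

Definition in_span_X (f : {set 'I_fn} -> R) : Prop :=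
  exists b : 'I_fn -> R, forall I, is_ideal I ->
    f I = \sum_(q | shared q) b q * chi q I.

Definition X_lin_indep : Prop :=
  forall b : 'I_fn -> R,
    (forall I, is_ideal I -> \sum_(q | shared q) b q * chi q I = 0) ->
    forall q, shared q -> b q = 0.

Definition is_fence_comp : Prop :=
  [/\ (2 <= tlen)%N, all (fun a => 0 < a)%N alpha, (2 <= head 0 alpha)%N & (2 <= last 0 alpha)%N].

End Fence.

(* Main.v *)
Require Import Defs.
From HB Require Import structures.
From mathcomp Require Import all_boot all_order all_algebra.
From mathcomp Require Import reals.
From mathcomp Require Import zify ring lra.
Import Order.TTheory GRing.Theory Num.Theory.
Set Implicit Arguments. Unset Strict Implicit. Unset Printing Implicit Defensive.

Ltac normval := repeat match goal with
 | H : context [@isSub.val_subdef _ _ _ _ ?x] |- _ => progress change (@isSub.val_subdef _ _ _ _ x) with (nat_of_ord x) in H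
 | |- context [@isSub.val_subdef _ _ _ _ ?x] => progress change (@isSub.val_subdef _ _ _ _ x) with (nat_of_ord x)
 end.
Ltac slia := normval; lia.

Section Poset.
Variable alpha : seq nat.
Local Notation n := (fn alpha).
Local Notation T := 'I_(fn alpha).
Local Notation up := (up alpha).

Lemma covE (x y : T) : cov x y =
  ((val y == (val x).+1) && up (val x).+1) ||
  ((val x == (val y).+1) && ~~ up (val y).+1).
Proof. by []. Qed.

Lemma cov_neq (x y : T) : cov x y -> x != y.
Proof.
rewrite covE => /orP[/andP[/eqP h _]|/andP[/eqP h _]]; apply/eqP => e;
  rewrite e in h; slia.
Qed.

Definition side (a b x : T) : bool :=
  if val a < val b then val a < val x else val x < val a.

Lemma side_step (a b x z : T) : cov a b -> side a b x -> cov x z -> side a b z.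
Proof.
rewrite /side !covE => /orP[/andP[/eqP hb ub]|/andP[/eqP ha ua]].
- rewrite hb ltnSn => hx /orP[/andP[/eqP hz uz]|/andP[/eqP hz uz]]; first lia.
  case: (ltngtP (val a) (val z)) => // e; first lia.
  simpl in *; by rewrite -e ub in uz.
- rewrite ha ltnNge leqnSn /= => hx /orP[/andP[/eqP hz uz]|/andP[/eqP hz uz]]; last lia.
  case: (ltngtP (val z) (val b).+1) => // e; first by simpl in *; lia.
  simpl in *; have ex : nat_of_ord x = nat_of_ord b by lia.
  by rewrite ex in uz; rewrite uz in ua.
Qed.

Lemma side_up (a b x w : T) : cov a b -> side a b x -> fle x w -> side a b w.
Proof.
move=> cab sx /connectP[p pth ->]; elim: p x pth sx => //= z p IH x /andP[cxz pth] sx.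
by apply: IH pth _; apply: side_step cab sx cxz.
Qed.

Lemma side_b (a b : T) : cov a b -> side a b b.
Proof.
rewrite /side covE => /orP[/andP[/eqP h _]|/andP[/eqP h _]]; rewrite h.
  by rewrite ltnSn.
by rewrite ltnNge leqnSn /= ltnSn.
Qed.

Lemma side_a (a b : T) : ~~ side a b a.
Proof. by rewrite /side; case: ifP => _; rewrite ltnn. Qed.

Lemma fle_refl (x : T) : fle x x.
Proof. exact: connect0. Qed.

Lemma fle_trans (x y z : T) : fle x y -> fle y z -> fle x z.
Proof. exact: connect_trans. Qed.

Lemma cov_fle (x y : T) : cov x y -> fle x y.
Proof. exact: connect1. Qed.

Lemma first_step (x y : T) : fle x y -> x != y -> exists z, cov x z /\ fle z y.
Proof.
move=> /connectP[[|z p] /= pth ->]; first by rewrite eqxx.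
case/andP: pth => c pth _; exists z; split => //.
by apply/connectP; exists p.
Qed.

Lemma last_step (x y : T) : fle x y -> x != y -> exists z, fle x z /\ cov z y.
Proof.
move=> /connectP[p pth ->]; case/lastP: p pth => [|p z]; first by rewrite eqxx.
rewrite rcons_path last_rcons => /andP[pth c] _; exists (last x p); split => //.
by apply/connectP; exists p.
Qed.

Lemma fle_anti (x y : T) : fle x y -> fle y x -> x = y.
Proof.
move=> lxy lyx; apply/eqP/negPn/negP => ne.
have [z [cxz lzy]] := first_step lxy ne.
have := side_up cxz (side_b cxz) (fle_trans lzy lyx).
by rewrite (negbTE (side_a _ _)).
Qed.

Lemma cov_not_fle (x y : T) : cov x y -> ~~ fle y x.
Proof.
move=> c; apply/negP => l.
have := fle_anti (cov_fle c) l; apply/eqP; exact: cov_neq.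
Qed.

Lemma cov_asym (x y : T) : cov x y -> ~~ cov y x.
Proof. move=> c; apply/negP => c2; have := cov_not_fle c; by rewrite (cov_fle c2). Qed.


Definition adj (r y : T) := (val y == (val r).+1) || ((val y).+1 == val r).

Lemma cov_adj (x y : T) : cov x y -> adj x y && adj y x.
Proof. rewrite covE /adj => /orP[/andP[/eqP h _]|/andP[/eqP h _]]; rewrite h eqxx ?orbT //. Qed.

Lemma adj_cov (x y : T) : adj x y -> cov x y || cov y x.
Proof.
rewrite /adj !covE => /orP[/eqP h|/eqP h]; rewrite h eqxx /=.
  by case: (up (nat_of_ord x).+1); rewrite ?orbT.
by case: (up (nat_of_ord x)); rewrite ?orbT.
Qed.

Lemma adj_opp (r y q : T) : adj r y -> adj r q -> y != q -> ~~ side r y q.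
Proof.
move=> a1 a2; rewrite -(inj_eq val_inj); move: a1 a2; rewrite /adj /side /=.
case: ifP; lia.
Qed.

Lemma adj_same (q r z : T) : adj r z -> adj r q -> z != q -> adj q r -> side q r z.
Proof.
move=> a1 a2; rewrite -(inj_eq val_inj); move: a1 a2; rewrite /adj /side /=.
case: ifP; lia.
Qed.

Lemma idealP (I : {set T}) :
  is_ideal I <-> (forall x y, cov x y -> y \in I -> x \in I).
Proof.
split=> [h x y c yI|h x y yI l]; first exact: h yI (cov_fle c).
move: l yI => /connectP[p pth ->]; elim: p x pth => //= z p IH x /andP[c pth] yI.
exact: h c (IH z pth yI).
Qed.

Lemma in_maxE (I : {set T}) q : is_ideal I ->
  in_max I q = (q \in I) && [forall y, cov q y ==> (y \notin I)].
Proof.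
move=> hI; rewrite /in_max; case qI: (q \in I) => //=.
apply/forallP/forallP => h y.
- apply/implyP => c; apply/negP => yI; have := h y.
  by rewrite yI /= /flt (cov_neq c) (cov_fle c).
- apply/implyP => rI; apply/negP => /andP[ne l].
  have [z [c lz]] := first_step l ne.
  have zI := hI z y rI lz; have := h z; by rewrite c zI.
Qed.

Lemma in_minE (I : {set T}) q : is_ideal I ->
  in_min_compl I q = (q \notin I) && [forall p, cov p q ==> (p \in I)].
Proof.
move=> hI; rewrite /in_min_compl; case qI: (q \in I) => //=.
apply/forallP/forallP => h y.
- apply/implyP => c; apply/negPn/negP => yI; have := h y.
  by rewrite yI /= /flt (cov_neq c) (cov_fle c).
- apply/implyP => rI; apply/negP => /andP[ne l].
  have [z [lz c]] := last_step l ne.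
  have := h z; rewrite c /= => zI.
  by move: rI; rewrite (hI y z zI lz).
Qed.

Definition near (r y : T) := (y == r) || cov r y || cov y r.

Lemma local_status (I J : {set T}) r : is_ideal I -> is_ideal J ->
  (forall y, near r y -> (y \in I) = (y \in J)) ->
  in_max I r = in_max J r /\ in_min_compl I r = in_min_compl J r.
Proof.
move=> hI hJ h; rewrite !in_maxE // !in_minE // h ?/near ?eqxx //.
split; congr (_ && _); apply: eq_forallb => y.
  by case c: (cov r y) => //=; rewrite h // /near c orbT.
by case c: (cov y r) => //=; rewrite h // /near c !orbT.
Qed.

Definition Dn (q : T) : {set T} := [set x | fle x q].
Definition Ds (q : T) : {set T} := Dn q :\ q.

Lemma in_Dn q x : (x \in Dn q) = fle x q.
Proof. by rewrite inE. Qed.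

Lemma in_Ds q x : (x \in Ds q) = (x != q) && fle x q.
Proof. by rewrite !inE. Qed.

Lemma Dn_ideal q : is_ideal (Dn q).
Proof. move=> x y; rewrite !in_Dn => h l; exact: fle_trans l h. Qed.

Lemma Ds_ideal q : is_ideal (Ds q).
Proof.
move=> x y; rewrite !in_Ds => /andP[ne lyq] lxy; rewrite (fle_trans lxy lyq) andbT.
apply/eqP => e; subst x; by rewrite (fle_anti lyq lxy) eqxx in ne.
Qed.

Lemma setU_ideal (I J : {set T}) : is_ideal I -> is_ideal J -> is_ideal (I :|: J).
Proof.
move=> hI hJ x y; rewrite !inE => /orP[yI|yJ] l.
  by rewrite (hI x y yI l).
by rewrite (hJ x y yJ l) orbT.
Qed.

Lemma set0_ideal : is_ideal (set0 : {set T}).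
Proof. by move=> x y; rewrite inE. Qed.


Lemma st_q_Dn q : in_max (Dn q) q /\ ~~ in_min_compl (Dn q) q.
Proof.
rewrite in_maxE ?in_minE; try exact: Dn_ideal.
rewrite in_Dn fle_refl /=; split => //.
apply/forallP => y; apply/implyP => c; rewrite in_Dn; exact: cov_not_fle c.
Qed.

Lemma st_q_Ds q : ~~ in_max (Ds q) q /\ in_min_compl (Ds q) q.
Proof.
rewrite in_maxE ?in_minE; try exact: Ds_ideal.
rewrite in_Ds eqxx /=; split => //.
apply/forallP => p; apply/implyP => c; by rewrite in_Ds (cov_neq c) (cov_fle c).
Qed.

Lemma st_low_Dn q r : cov r q -> ~~ in_max (Dn q) r /\ ~~ in_min_compl (Dn q) r.
Proof.
move=> c; rewrite in_maxE ?in_minE; try exact: Dn_ideal.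
rewrite in_Dn (cov_fle c) /=; split => //.
by apply/negP => /forallP/(_ q); rewrite c in_Dn fle_refl.
Qed.

Lemma st_low_Ds q r : cov r q -> in_max (Ds q) r /\ ~~ in_min_compl (Ds q) r.
Proof.
move=> c; rewrite in_maxE ?in_minE; try exact: Ds_ideal.
rewrite in_Ds (cov_neq c) (cov_fle c) /=; split => //.
apply/forallP => y; apply/implyP => cy; rewrite in_Ds.
case: eqP => [->//|/eqP ne] /=; apply/negP => l.
have := side_up cy (side_b cy) l.
have a1 := cov_adj cy; have a2 := cov_adj c.
case/andP: a1 => a1 _; case/andP: a2 => a2 _.
by rewrite (negbTE (adj_opp a1 a2 ne)).
Qed.

Lemma st_up_Dn q r : cov q r ->
  ~~ in_max (Dn q) r /\ in_min_compl (Dn q) r = [forall z, cov z r ==> (z == q)].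
Proof.
move=> c; rewrite in_maxE ?in_minE; try exact: Dn_ideal.
rewrite in_Dn (negbTE (cov_not_fle c)) /=; split => //.
apply: eq_forallb => z; case cz: (cov z r) => //=; rewrite in_Dn.
case: eqP => [->|/eqP ne]; first exact: fle_refl.
apply/negP => l.
have a1 := cov_adj cz; have a2 := cov_adj c.
case/andP: a1 => _ a1; case/andP: a2 => a2 a3.
have := side_up c (adj_same a1 a3 ne a2) l.
by rewrite (negbTE (side_a _ _)).
Qed.

Lemma st_up_Ds q r : cov q r -> ~~ in_max (Ds q) r /\ ~~ in_min_compl (Ds q) r.
Proof.
move=> c; rewrite in_maxE ?in_minE; try exact: Ds_ideal.
rewrite in_Ds (negbTE (cov_not_fle c)) andbF /=; split => //.
by apply/negP => /forallP/(_ q); rewrite c in_Ds eqxx.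
Qed.

Lemma st_far q r : ~~ near r q ->
  in_max (Dn q) r = in_max (Ds q) r /\ in_min_compl (Dn q) r = in_min_compl (Ds q) r.
Proof.
move=> nn; apply: local_status; [exact: Dn_ideal|exact: Ds_ideal|].
move=> y ny; rewrite in_Ds in_Dn; case: eqP => // e; subst y.
by rewrite ny in nn.
Qed.


Lemma near_val r y : near r y -> (val r <= (val y).+1) && (val y <= (val r).+1).
Proof.
rewrite /near => /orP[/orP[/eqP->|c]|c]; first by rewrite leqnSn.
  by move: (cov_adj c); rewrite /adj; slia.
by move: (cov_adj c); rewrite /adj; slia.
Qed.

Lemma sameL (L R1 R2 : {set T}) m r :
  is_ideal (L :|: R1) -> is_ideal (L :|: R2) ->
  (forall x, x \in R1 :|: R2 -> m <= val x) ->
  (forall x, val x = m -> x \in R1 :|: R2 -> x \in L) ->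
  (val r).+1 <= m ->
  in_max (L :|: R1) r = in_max (L :|: R2) r /\
  in_min_compl (L :|: R1) r = in_min_compl (L :|: R2) r.
Proof.
move=> i1 i2 hR hm hr; apply: local_status => // y /near_val ny.
have key : forall Rx : {set T}, Rx \subset R1 :|: R2 -> (y \in L :|: Rx) = (y \in L).
  move=> Rx sub; rewrite inE; case yL: (y \in L) => //=.
  apply/negP => yR; have yR' := subsetP sub y yR.
  have := hR y yR'; move=> h; have e : val y = m by slia.
  by rewrite (hm y e yR') in yL.
by rewrite !key // ?subsetUl ?subsetUr.
Qed.

Lemma sameR (L1 L2 R : {set T}) m r :
  is_ideal (L1 :|: R) -> is_ideal (L2 :|: R) ->
  (forall x, x \in L1 :|: L2 -> val x <= m) ->
  (forall x, val x = m -> x \in L1 :|: L2 -> x \in R) ->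
  m.+1 <= val r ->
  in_max (L1 :|: R) r = in_max (L2 :|: R) r /\
  in_min_compl (L1 :|: R) r = in_min_compl (L2 :|: R) r.
Proof.
move=> i1 i2 hL hm hr; apply: local_status => // y /near_val ny.
have key : forall Lx : {set T}, Lx \subset L1 :|: L2 -> (y \in Lx :|: R) = (y \in R).
  move=> Lx sub; rewrite inE orbC; case yR: (y \in R) => //=.
  apply/negP => yL; have yL' := subsetP sub y yL.
  have := hL y yL'; move=> h; have e : val y = m by slia.
  by rewrite (hm y e yL') in yR.
by rewrite !key // ?subsetUl ?subsetUr.
Qed.

Lemma below_side (a b x w : T) : cov a b -> fle x w -> ~~ side a b w -> ~~ side a b x.
Proof. move=> c l; apply: contra => sx; exact: side_up c sx l. Qed.

End Poset.

Section Eqs.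
Variable alpha : seq nat.
Local Notation T := 'I_(fn alpha).
Variable R : realType.
Local Open Scope ring_scope.

Lemma sum_single (m0 : T) (G : T -> R) :
  (forall r, r != m0 -> G r = 0) -> \sum_r G r = G m0.
Proof. by move=> h; rewrite (bigD1 m0) //= big1 ?addr0 // => r /h. Qed.

Lemma sum4 (P : pred T) (G : T -> {set T} -> R) A B C D :
  \sum_(r | P r) (G r A - G r B - G r C + G r D) =
  \sum_(r | P r) G r A - \sum_(r | P r) G r B - \sum_(r | P r) G r C + \sum_(r | P r) G r D.
Proof. by rewrite !big_split /= !sumrN. Qed.

Lemma chi_st (I J : {set T}) r : in_max I r = in_max J r -> chi R r I = chi R r J.
Proof. by rewrite /chi => ->. Qed.

Lemma Tog_st (I J : {set T}) r : in_max I r = in_max J r ->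
  in_min_compl I r = in_min_compl J r -> Tog R r I = Tog R r J.
Proof. by rewrite /Tog => -> ->. Qed.

Variables (b cq : T -> R) (c : R).
Hypothesis Hf : forall I : {set T}, is_ideal I ->
  \sum_(q | shared q) b q * chi R q I = c + \sum_q cq q * Tog R q I.

Definition M4 (L0 L1 R0 R1 : {set T}) (g : {set T} -> R) :=
  g (L1 :|: R1) - g (L1 :|: R0) - g (L0 :|: R1) + g (L0 :|: R0).

Lemma mixed_eq (L0 L1 R0 R1 : {set T}) (m0 : T) :
  is_ideal (L1 :|: R1) -> is_ideal (L1 :|: R0) ->
  is_ideal (L0 :|: R1) -> is_ideal (L0 :|: R0) ->
  (forall x, x \in L0 :|: L1 -> (val x <= val m0)%N) ->
  (forall x, x \in R0 :|: R1 -> (val m0 <= val x)%N) ->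
  (forall x, val x = val m0 -> x \in L0 :|: L1 -> x \in R0 :&: R1) ->
  (forall x, val x = val m0 -> x \in R0 :|: R1 -> x \in L0 :&: L1) ->
  (if shared m0 then b m0 else 0) * M4 L0 L1 R0 R1 (chi R m0) =
  cq m0 * M4 L0 L1 R0 R1 (Tog R m0).
Proof.
move=> i11 i10 i01 i00 hL hR hmL hmR.
have HM : forall g : T -> {set T} -> R,
    (forall r I J, in_max I r = in_max J r -> in_min_compl I r = in_min_compl J r ->
        g r I = g r J) ->
    forall r, r != m0 -> M4 L0 L1 R0 R1 (g r) = 0.
  move=> g gst r ne; rewrite /M4.
  have : val r != val m0 by rewrite (inj_eq val_inj).
  case: (ltngtP (val r) (val m0)) => // h _.
  - have hmR' : forall x, val x = val m0 -> x \in R1 :|: R0 -> x \in L1.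
      move=> x e xR; have := hmR x e; rewrite setUC => /(_ xR).
      by rewrite inE => /andP[].
    have hmR'' : forall x, val x = val m0 -> x \in R1 :|: R0 -> x \in L0.
      move=> x e xR; have := hmR x e; rewrite setUC => /(_ xR).
      by rewrite inE => /andP[].
    have hR' : forall x, x \in R1 :|: R0 -> (val m0 <= val x)%N.
      by move=> x; rewrite setUC; apply: hR.
    have [e1 e2] := sameL i11 i10 hR' hmR' h.
    have [e3 e4] := sameL i01 i00 hR' hmR'' h.
    rewrite (gst _ _ _ e1 e2) (gst _ _ _ e3 e4).
    ring.
  - have hmL' : forall x, val x = val m0 -> x \in L1 :|: L0 -> x \in R1.
      move=> x e xL; have := hmL x e; rewrite setUC => /(_ xL).
      by rewrite inE => /andP[].
    have hmL'' : forall x, val x = val m0 -> x \in L1 :|: L0 -> x \in R0.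
      move=> x e xL; have := hmL x e; rewrite setUC => /(_ xL).
      by rewrite inE => /andP[].
    have hL' : forall x, x \in L1 :|: L0 -> (val x <= val m0)%N.
      by move=> x; rewrite setUC; apply: hL.
    have [e1 e2] := sameR i11 i01 hL' hmL' h.
    have [e3 e4] := sameR i10 i00 hL' hmL'' h.
    rewrite (gst _ _ _ e1 e2) (gst _ _ _ e3 e4).
    ring.
have E := congr1 (fun x => x) (Hf i11).
have LHS : \sum_(q | shared q) b q * M4 L0 L1 R0 R1 (chi R q) =
           cq m0 * M4 L0 L1 R0 R1 (Tog R m0).
  have -> : \sum_(q | shared q) b q * M4 L0 L1 R0 R1 (chi R q) =
      \sum_(q | shared q) (b q * chi R q (L1 :|: R1) - b q * chi R q (L1 :|: R0)
         - b q * chi R q (L0 :|: R1) + b q * chi R q (L0 :|: R0)).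
    by apply: eq_bigr => q _; rewrite /M4; ring.
  rewrite (sum4 _ (fun q I => b q * chi R q I)) (Hf i11) (Hf i10) (Hf i01) (Hf i00).
  have -> : forall x y z w : R, (c + x) - (c + y) - (c + z) + (c + w) = x - y - z + w.
    by move=> x y z w; ring.
  rewrite -(sum4 _ (fun q I => cq q * Tog R q I)) (sum_single (m0 := m0)) /M4 //.
    by ring.
  move=> r ne; have := HM (fun r I => Tog R r I) (fun r I J => @Tog_st I J r) r ne.
  rewrite /M4 => h; rewrite -[RHS](mulr0 (cq r)) -h; ring.
rewrite -LHS big_mkcond /= (sum_single (m0 := m0)); first by case: ifP => _; rewrite ?mul0r.
move=> r ne; case: ifP => // _.
have := HM (fun r I => chi R r I) (fun r I J e _ => @chi_st I J r e) r ne.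
by move=> ->; rewrite mulr0.
Qed.


Definition D1 (q r : T) : R := if r == q then 1 else if cov r q then -1 else 0.
Definition D2 (q r : T) : R := if r == q then -2 else if cov r q then 1 else
  if cov q r then (if [forall z, cov z r ==> (z == q)] then 1 else 0) else 0.

Lemma D_point (q r : T) :
  chi R r (Dn q) - chi R r (Ds q) = D1 q r /\ Tog R r (Dn q) - Tog R r (Ds q) = D2 q r.
Proof.
rewrite /D1 /D2 /chi /Tog; case: eqP => [->|/eqP ne].
  have [a1 a2] := st_q_Dn q; have [a3 a4] := st_q_Ds q.
  rewrite a1 (negbTE a2) (negbTE a3) a4; split; ring.
case c1: (cov r q).
  have [a1 a2] := st_low_Dn c1; have [a3 a4] := st_low_Ds c1.
  rewrite (negbTE a1) (negbTE a2) a3 (negbTE a4); split; ring.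
case c2: (cov q r).
  have [a1 a2] := st_up_Dn c2; have [a3 a4] := st_up_Ds c2.
  rewrite (negbTE a1) a2 (negbTE a3) (negbTE a4); split; first ring.
  case: ifP => _; ring.
have nn : ~~ near r q by rewrite /near c1 c2 eq_sym (negbTE ne).
have [a1 a2] := st_far nn; rewrite a1 a2; split; ring.
Qed.

Lemma diff_eq (q : T) : \sum_(r | shared r) b r * D1 q r = \sum_r cq r * D2 q r.
Proof.
have E1 := Hf (@Dn_ideal alpha q); have E2 := Hf (@Ds_ideal alpha q).
have : \sum_(r | shared r) b r * chi R r (Dn q) - \sum_(r | shared r) b r * chi R r (Ds q)
     = \sum_r cq r * Tog R r (Dn q) - \sum_r cq r * Tog R r (Ds q).
  by rewrite E1 E2; ring.
rewrite -!sumrB.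
have -> : \sum_(r | shared r) (b r * chi R r (Dn q) - b r * chi R r (Ds q)) =
          \sum_(r | shared r) b r * D1 q r.
  by apply: eq_bigr => r _; rewrite -(D_point q r).1; ring.
have -> : \sum_r (cq r * Tog R r (Dn q) - cq r * Tog R r (Ds q)) =
          \sum_r cq r * D2 q r.
  by apply: eq_bigr => r _; rewrite -(D_point q r).2; ring.
done.
Qed.

End Eqs.

Section Struct.
Variable alpha : seq nat.
Hypothesis Hal : is_fence_comp alpha.
Local Notation t := (tlen alpha).
Local Notation ap := (apart alpha).
Local Notation n := (fn alpha).

Lemma apS k : ap k.+1 = ap k + nth 0 alpha k.
Proof. by rewrite /apart big_ord_recr. Qed.

Lemma alpha_pos k : k < t -> 0 < nth 0 alpha k.
Proof. case: Hal => _ /all_nthP h _ _ /h; exact. Qed.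

Lemma ap_lt i j : i < j -> j <= t -> ap i < ap j.
Proof.
move=> lij; elim: j lij => // j IH; rewrite ltnS leq_eqVlt => /orP[/eqP->|lij] hj.
  by rewrite apS -addn1 leq_add2l alpha_pos.
apply: (ltn_trans (IH lij (ltnW hj))); by rewrite apS -addn1 leq_add2l alpha_pos.
Qed.

Lemma t2 : 2 <= t. Proof. by case: Hal. Qed.

Lemma ap1 : 2 <= ap 1.
Proof.
rewrite apS /apart big_ord0 add0n nth0; by case: Hal.
Qed.

Lemma apt : ap t.-1 + 2 <= ap t.
Proof.
have t1 : t = t.-1.+1 by have := t2; lia.
rewrite [in X in _ <= X]t1 apS leq_add2l.
case: Hal => _ _ _; rewrite -nth_last.
by rewrite /tlen.
Qed.

Definition shn (u : nat) := has (fun i => u.+1 == ap i) (iota 1 t.-1).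

Lemma shn_bounds u : shn u -> 0 < u /\ u.+1 < n.
Proof.
case/hasP => i; rewrite mem_iota => /andP[h1 h2] /eqP e.
have t1 := t2.
have a1 : ap 1 <= ap i.
  case: (ltngtP 1 i) => h; [apply: ltnW; apply: ap_lt => //; lia | lia | by rewrite h].
have a2 : ap i <= ap t.-1.
  case: (ltngtP i t.-1) => h; [apply: ltnW; apply: ap_lt => //; lia| lia| by rewrite h].
have := ap1; have := apt; rewrite /fn; lia.
Qed.

Lemma count_split (s : seq nat) u :
  count (fun k => ap k <= u.+1) s = count (fun k => ap k <= u) s + count (fun k => ap k == u.+1) s.
Proof.
elim: s => //= k s ->.
case: (ltngtP (ap k) u.+1) => h; rewrite ?ltnS; try lia.
Qed.

Lemma count_eq_has u :
  count (fun k => ap k == u.+1) (iota 1 t.-1) = shn u.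
Proof.
rewrite /shn.
have -> : count (fun k => ap k == u.+1) (iota 1 t.-1) = count_mem u.+1 (map ap (iota 1 t.-1)).
  by rewrite count_map; apply: eq_count => k /=; rewrite eq_sym.
rewrite count_uniq_mem.
  congr nat_of_bool.
  apply/mapP/hasP => [[k kin ->]|[k kin /eqP ->]]; [exists k => //|exists k => //].
rewrite map_inj_in_uniq ?iota_uniq // => i j; rewrite !mem_iota => /andP[_ hi] /andP[_ hj] e.
case: (ltngtP i j) => // h.
  have := ap_lt h; rewrite e ltnn; have := t2; move=> ?; move/(_ ltac:(lia)); done.
have := ap_lt h; rewrite e ltnn; have := t2; move=> ?; move/(_ ltac:(lia)); done.
Qed.

Lemma up_step u : u < n -> up alpha u.+1 = up alpha u (+) shn u.
Proof.
move=> hu; rewrite /up /seg /=.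
have t1 : t = t.-1 + 1 by have := t2; lia.
rewrite count_split {2}t1 iotaD count_cat /= addnA.
have -> : (ap (1 + t.-1) == u.+1) = false.
  apply/negP => /eqP e; have e2 : 1 + t.-1 = t by lia. rewrite e2 in e; move: hu; rewrite /fn e; lia.
rewrite addn0 count_eq_has oddD.
rewrite addbF oddD; by case: (odd _); case: (shn u).
Qed.

End Struct.

Section Elem.
Variable alpha : seq nat.
Hypothesis Hal : is_fence_comp alpha.
Local Notation n := (fn alpha).
Local Notation T := 'I_(fn alpha).
Local Notation up := (up alpha).

Lemma shE (r : T) : shared r = [&& 0 < val r, (val r).+1 < n & up (val r) != up (val r).+1].
Proof.
have hu := up_step Hal (ltn_ord r).
rewrite /shared -/(shn alpha (val r)).
case sh: (shn alpha (val r)).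
  have [h1 h2] := shn_bounds Hal sh; rewrite h1 h2 hu sh /=.
  by case: (up _).
rewrite hu sh addbF eqxx; by rewrite !andbF.
Qed.

Lemma nb_right (r : T) : (val r).+1 < n -> {z : T | val z = (val r).+1}.
Proof. move=> h; by exists (Ordinal h). Qed.

Lemma nb_left (r : T) : 0 < val r -> {z : T | val z = (val r).-1}.
Proof.
move=> h; have h' : (val r).-1 < n by have := ltn_ord r; slia.
by exists (Ordinal h').
Qed.

Lemma cov_nb (z r u1 u2 : T) : val u1 = (val r).-1 -> val u2 = (val r).+1 -> 0 < val r ->
  cov z r || cov r z -> z = u1 \/ z = u2.
Proof.
move=> e1 e2 pos c.
have : adj r z by case/orP: c => c; have := cov_adj c; case/andP.
rewrite /adj => /orP[/eqP h|/eqP h].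
  right; apply: val_inj; by rewrite h e2.
left; apply: val_inj; rewrite e1 -h; by [].
Qed.

Lemma sh_class (r : T) : shared r -> exists u1 u2 : T,
  [/\ val u1 = (val r).-1, val u2 = (val r).+1, 0 < val r &
     (cov r u1 && cov r u2) || (cov u1 r && cov u2 r)].
Proof.
rewrite shE => /and3P[h1 h2 h3].
have [u1 e1] := nb_left h1; have [u2 e2] := nb_right h2.
exists u1, u2; split => //.
rewrite !covE e1 e2 /=.
move: h1 h2 h3; change (\val r) with (nat_of_ord r); move: (nat_of_ord r) => k h1 h2 h3.
have -> : k.-1.+1 = k by lia.
rewrite eqxx.
have -> : k == k.+2 = false by lia.
rewrite eqxx.
have -> : k.-1 == k.+1 = false by lia.
move: h3; case: (up k); case: (up k.+1) => //.
Qed.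

Lemma sh_lowcov (r q : T) : shared r -> cov r q -> exists u1 u2 : T,
  [/\ val u1 = (val r).-1, val u2 = (val r).+1, 0 < val r, cov r u1 & cov r u2].
Proof.
move=> /sh_class [u1 [u2 [e1 e2 pos]]] /orP[/andP[c1 c2]|/andP[c1 c2]] c.
  by exists u1, u2.
have : q = u1 \/ q = u2 by apply: cov_nb e1 e2 pos _; rewrite c orbT.
case=> e; subst q; [have := cov_asym c1|have := cov_asym c2]; by rewrite c.
Qed.

Lemma F1 (q r : T) : cov q r -> [forall z, cov z r ==> (z == q)] = ~~ shared r.
Proof.
move=> c; rewrite shE; move: (c); rewrite covE => /orP[/andP[/eqP e u]|/andP[/eqP e u]].
- have pos : 0 < val r by rewrite e.
  have ur : up (val r) by rewrite e.
  rewrite pos ur /=.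
  case h: ((val r).+1 < n) => /=.
  + case ur1: (up (val r).+1) => /=.
    * apply/forallP => z; apply/implyP; rewrite covE => /orP[/andP[/eqP e2 _]|/andP[/eqP e2 u2]].
        apply/eqP/val_inj; slia.
      by rewrite ur1 in u2.
    * have [z ez] := nb_right h.
      apply/negP => /forallP/(_ z); rewrite covE ez eqxx ur1 /= orbT /=.
      move/eqP => zq; move: ez; rewrite zq e; slia.
  + apply/forallP => z; apply/implyP; rewrite covE => /orP[/andP[/eqP e2 _]|/andP[/eqP e2 u2]].
      apply/eqP/val_inj; slia.
    have := ltn_ord z; rewrite e2; slia.
- have h : (val r).+1 < n by rewrite -e; exact: ltn_ord.
  rewrite h (negbTE u).
  case pos: (0 < val r); case ur: (up (val r)); rewrite /=.
  + have [z ez] := nb_left pos.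
    apply/negP => /forallP/(_ z); rewrite covE.
    have -> : (val z).+1 = val r by slia.
    rewrite ur andbT eqxx /= => /eqP zq; move: ez; rewrite zq e; slia.
  + apply/forallP => z; apply/implyP; rewrite covE => /orP[/andP[/eqP e2 u2]|/andP[/eqP e2 _]].
      by rewrite -e2 ur in u2.
    apply/eqP/val_inj; slia.
  + apply/forallP => z; apply/implyP; rewrite covE => /orP[/andP[/eqP e2 u2]|/andP[/eqP e2 _]].
      by rewrite e2 in pos.
    apply/eqP/val_inj; slia.
  + apply/forallP => z; apply/implyP; rewrite covE => /orP[/andP[/eqP e2 u2]|/andP[/eqP e2 _]].
      by rewrite e2 in pos.
    apply/eqP/val_inj; slia.
Qed.

End Elem.

Section Main.
Variable alpha : seq nat.
Hypothesis Hal : is_fence_comp alpha.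
Local Notation n := (fn alpha).
Local Notation T := 'I_(fn alpha).
Variable R : realType.
Local Open Scope ring_scope.

Lemma side_lt (a b x : T) : (val a < val b)%N -> side a b x = (val a < val x)%N.
Proof. by rewrite /side => ->. Qed.
Lemma side_gt (a b x : T) : (val b < val a)%N -> side a b x = (val x < val a)%N.
Proof. rewrite /side => h; case: ifP => // h'; move: h h'; slia. Qed.

Lemma chi_out (r : T) (I : {set T}) : r \notin I -> chi R r I = 0.
Proof. by rewrite /chi /in_max => /negbTE ->. Qed.

Lemma Tog_in (r : T) (I : {set T}) : r \in I -> Tog R r I = - chi R r I.
Proof. rewrite /Tog /chi /in_min_compl => ->; case: ifP => _ /=; by rewrite ?oppr0. Qed.

Lemma Tog_out0 (r p : T) (I : {set T}) : is_ideal I -> r \notin I -> cov p r -> p \notin I -> Tog R r I = 0.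
Proof.
move=> hI rI c pI; rewrite /Tog in_minE // (negbTE rI).
have -> : [forall p, cov p r ==> (p \in I)] = false.
  by apply/negP => /forallP/(_ p); rewrite c (negbTE pI).
by rewrite /in_max (negbTE rI).
Qed.

Lemma Tog_out1 (r : T) (I : {set T}) : is_ideal I -> r \notin I ->
  (forall p, cov p r -> p \in I) -> Tog R r I = 1.
Proof.
move=> hI rI h; rewrite /Tog in_minE // rI /=.
have -> // : [forall p, cov p r ==> (p \in I)].
by apply/forallP => p; apply/implyP => /h.
Qed.

Variables (b cq : T -> R) (c : R).
Hypothesis Hf : forall I : {set T}, is_ideal I ->
  \sum_(q | shared q) b q * chi R q I = c + \sum_q cq q * Tog R q I.

Lemma peak_c (r u1 u2 : T) : val u1 = (val r).-1 -> val u2 = (val r).+1 -> (0 < val r)%N ->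
  cov u1 r -> cov u2 r -> cq r = 0.
Proof.
move=> e1 e2 pos c1 c2.
have l1 : (val u1 < val r)%N by rewrite e1; slia.
have l2 : (val r < val u2)%N by rewrite e2.
have b1 : forall x, x \in Dn u1 -> (val x <= val u1)%N.
  move=> x; rewrite in_Dn => l; have := below_side c1 l (side_a u1 r).
  by rewrite side_lt // -leqNgt.
have b2 : forall x, x \in Dn u2 -> (val u2 <= val x)%N.
  move=> x; rewrite in_Dn => l; have := below_side c2 l (side_a u2 r).
  by rewrite side_gt // -leqNgt.
have i1 := @Dn_ideal alpha u1; have i2 := @Dn_ideal alpha u2; have i0 := @set0_ideal alpha.
have E := @mixed_eq alpha R b cq c Hf set0 (Dn u1) set0 (Dn u2) r
  (setU_ideal i1 i2) (setU_ideal i1 i0) (setU_ideal i0 i2) (setU_ideal i0 i0).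
have hL : forall x, x \in set0 :|: Dn u1 -> (val x <= val r)%N.
  by move=> x; rewrite inE inE /= => /b1; slia.
have hR : forall x, x \in set0 :|: Dn u2 -> (val r <= val x)%N.
  by move=> x; rewrite inE inE /= => /b2; slia.
have hm1 : forall x, val x = val r -> x \in set0 :|: Dn u1 -> x \in set0 :&: Dn u2.
  by move=> x e; rewrite inE inE /= => /b1; slia.
have hm2 : forall x, val x = val r -> x \in set0 :|: Dn u2 -> x \in set0 :&: Dn u1.
  by move=> x e; rewrite inE inE /= => /b2; slia.
move: (E hL hR hm1 hm2); rewrite /M4.
have rn1 : r \notin Dn u1 by apply/negP => /b1; slia.
have rn2 : r \notin Dn u2 by apply/negP => /b2; slia.
have nU : forall A B : {set T}, r \notin A -> r \notin B -> r \notin A :|: B.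
  by move=> A B hA hB; rewrite inE negb_or hA hB.
have n0 : r \notin (set0 : {set T}) by rewrite inE.
rewrite !chi_out ?nU //.
have u1n2 : u1 \notin Dn u2 by apply/negP => /b2; slia.
have u2n1 : u2 \notin Dn u1 by apply/negP => /b1; slia.
rewrite (Tog_out1 (setU_ideal i1 i2)) ?nU //; last first.
  move=> p cp; have [->|->] := cov_nb e1 e2 pos (introT orP (or_introl cp)).
    by rewrite !inE !fle_refl ?orbT.
  by rewrite !inE !fle_refl ?orbT.
rewrite (@Tog_out0 r u2 (Dn u1 :|: set0) (setU_ideal i1 i0) _ c2) ?nU //; last by rewrite inE negb_or u2n1 inE.
rewrite (@Tog_out0 r u1 (set0 :|: Dn u2) (setU_ideal i0 i2) _ c1) ?nU //; last by rewrite inE negb_or u1n2 inE.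
rewrite (@Tog_out0 r u1 (set0 :|: set0) (setU_ideal i0 i0) _ c1) ?nU //; last by rewrite inE negb_or !inE.
move=> h; have h2 : cq r * (1 - 0 - 0 + 0) = 0 by rewrite -h; ring.
by move: h2; rewrite !subr0 addr0 mulr1.
Qed.


Lemma chi_blocked (r y : T) (I : {set T}) : cov r y -> y \in I -> chi R r I = 0.
Proof.
move=> cv yI; rewrite /chi /in_max.
have -> : [forall s, (s \in I) ==> ~~ flt r s] = false.
  by apply/negP => /forallP/(_ y); rewrite yI /flt (cov_neq cv) (cov_fle cv).
by rewrite andbF.
Qed.

Lemma valley_b (r u1 u2 : T) : val u1 = (val r).-1 -> val u2 = (val r).+1 -> (0 < val r)%N ->
  cov r u1 -> cov r u2 -> (if shared r then b r else 0) = - cq r.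
Proof.
move=> e1 e2 pos c1 c2.
have l1 : (val u1 < val r)%N by rewrite e1; slia.
have l2 : (val r < val u2)%N by rewrite e2.
have b1 : forall x, x \in Dn u1 -> (val x <= val r)%N.
  move=> x; rewrite in_Dn => l.
  have h : ~~ side r u2 u1 by rewrite side_lt // -leqNgt ltnW.
  by have := below_side c2 l h; rewrite side_lt // -leqNgt.
have b2 : forall x, x \in Dn u2 -> (val r <= val x)%N.
  move=> x; rewrite in_Dn => l.
  have h : ~~ side r u1 u2 by rewrite side_gt // -leqNgt ltnW.
  by have := below_side c1 l h; rewrite side_gt // -leqNgt.
have sD : forall q x : T, x \in Ds q -> x \in Dn q by move=> q x; rewrite in_Ds in_Dn => /andP[].
have i1 := @Dn_ideal alpha u1; have i2 := @Dn_ideal alpha u2.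
have j1 := @Ds_ideal alpha u1; have j2 := @Ds_ideal alpha u2.
have E := @mixed_eq alpha R b cq c Hf (Ds u1) (Dn u1) (Ds u2) (Dn u2) r
  (setU_ideal i1 i2) (setU_ideal i1 j2) (setU_ideal j1 i2) (setU_ideal j1 j2).
have hL : forall x, x \in Ds u1 :|: Dn u1 -> (val x <= val r)%N.
  by move=> x; rewrite inE => /orP[/sD|]; apply: b1.
have hR : forall x, x \in Ds u2 :|: Dn u2 -> (val r <= val x)%N.
  by move=> x; rewrite inE => /orP[/sD|]; apply: b2.
have rin : forall q : T, cov r q -> (r \in Ds q) && (r \in Dn q).
  by move=> q cq'; rewrite in_Ds in_Dn (cov_neq cq') (cov_fle cq').
have hm1 : forall x, val x = val r -> x \in Ds u1 :|: Dn u1 -> x \in Ds u2 :&: Dn u2.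
  by move=> x e _; rewrite (val_inj e) inE; apply: rin.
have hm2 : forall x, val x = val r -> x \in Ds u2 :|: Dn u2 -> x \in Ds u1 :&: Dn u1.
  by move=> x e _; rewrite (val_inj e) inE; apply: rin.
move: (E hL hR hm1 hm2); rewrite /M4.
have rU : forall A B : {set T}, r \in A -> r \in A :|: B by move=> A B h; rewrite inE h.
have r1 := rin _ c1; have r2 := rin _ c2.
case/andP: r1 => r1a r1b; case/andP: r2 => r2a r2b.
rewrite !Tog_in ?rU //.
have inU1 : forall B : {set T}, u1 \in Dn u1 :|: B by move=> B; rewrite !inE fle_refl.
have inU2 : forall A : {set T}, u2 \in A :|: Dn u2 by move=> A; rewrite !inE fle_refl orbT.
rewrite (chi_blocked c1 (inU1 _)) (chi_blocked c1 (inU1 _)) (chi_blocked c2 (inU2 _)).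
have -> : chi R r (Ds u1 :|: Ds u2) = 1.
  rewrite /chi in_maxE; last exact: (setU_ideal j1 j2).
  rewrite rU //=.
  have -> // : [forall y, cov r y ==> (y \notin Ds u1 :|: Ds u2)].
  apply/forallP => y; apply/implyP => cy.
  have [->|->] := cov_nb e1 e2 pos (introT orP (or_intror cy)).
    rewrite inE negb_or; apply/andP; split; first by rewrite in_Ds eqxx.
    apply/negP => /sD /b2; slia.
  rewrite inE negb_or; apply/andP; split; last by rewrite in_Ds eqxx.
  apply/negP => /sD /b1; slia.
move=> h; have h2 : (if shared r then b r else 0) = (if shared r then b r else 0) * (0 - 0 - 0 + 1) by ring.
rewrite h2 h; ring.
Qed.

End Main.

Section Energy.
Variable R : realType.
Local Open Scope ring_scope.

Definition Pv (C : nat -> R) (j : nat) : R := if j is k.+1 then C k else 0.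

Lemma energy_id (C : nat -> R) k :
  \sum_(j < k) C j * (2 * C j - Pv C j - C j.+1) =
  \sum_(j < k) (C j - Pv C j) ^+ 2 + Pv C k ^+ 2 - Pv C k * C k.
Proof.
elim: k => [|k IH]; first by rewrite !big_ord0 /=; ring.
rewrite !big_ord_recr /= IH /=; ring.
Qed.

Lemma energy (C : nat -> R) (m : nat) :
  (forall j, (m <= j)%N -> C j = 0) ->
  (forall j, (j < m)%N -> C j * (2 * C j - Pv C j - C j.+1) = 0) ->
  forall j, C j = 0.
Proof.
move=> hout hin.
have S0 : \sum_(j < m) C j * (2 * C j - Pv C j - C j.+1) = 0.
  by apply: big1 => j _; apply: hin.
rewrite energy_id (hout m (leqnn m)) mulr0 subr0 in S0.
have g1 : 0 <= \sum_(j < m) (C j - Pv C j) ^+ 2 by apply: sumr_ge0 => j _; apply: sqr_ge0.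
have := S0; move/eqP; rewrite paddr_eq0 //; last exact: sqr_ge0.
case/andP => /eqP hs _.
have hj : forall j : 'I_m, C j = Pv C j.
  move=> j; have := psumr_eq0P (fun (i : 'I_m) _ => sqr_ge0 (C i - Pv C i)) hs (isT : true).
  by move=> /(_ j)/eqP; rewrite sqrf_eq0 subr_eq0 => /eqP.
elim=> [|k IH].
  case: (ltnP 0 m) => h; last exact: hout.
  by rewrite (hj (Ordinal h)).
case: (ltnP k.+1 m) => h; last exact: hout.
by rewrite (hj (Ordinal h)) /= IH.
Qed.

End Energy.

Section Final.
Variable alpha : seq nat.
Hypothesis Hal : is_fence_comp alpha.
Local Notation n := (fn alpha).
Local Notation T := 'I_(fn alpha).
Variable R : realType.
Local Open Scope ring_scope.

Definition ext (G : T -> R) (k : nat) : R := if (insub k : option T) is Some x then G x else 0.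

Lemma ext_val (G : T -> R) (r : T) : ext G (val r) = G r.
Proof. by rewrite /ext valK. Qed.

Lemma ext_out (G : T -> R) k : (n <= k)%N -> ext G k = 0.
Proof. rewrite /ext => h; case: insubP => // x hk; move: hk; rewrite ltnNge h. by []. Qed.

Lemma sum_val_eq (G : T -> R) k : \sum_(r : T) (if val r == k then G r else 0) = ext G k.
Proof.
rewrite /ext; case: insubP => [x hk ex|hk].
  rewrite (sum_single (m0 := x)) ?ex ?eqxx // => r ne.
  case: eqP => // e; move: ne; rewrite -(inj_eq val_inj) e ex eqxx. by [].
apply: big1 => r _; case: eqP => // e; move: hk; rewrite -e ltn_ord. by [].
Qed.

Lemma chi_Dn (q r : T) : chi R r (Dn q) = if r == q then 1 else 0.
Proof.
case: eqP => [->|/eqP ne]; first by rewrite /chi (st_q_Dn q).1.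
case rD: (r \in Dn q); last by rewrite chi_out ?rD.
move: rD; rewrite in_Dn => l; have [z [cz lz]] := first_step l ne.
by apply: (chi_blocked R cz); rewrite in_Dn.
Qed.

Variables (b cq : T -> R) (c : R).
Hypothesis Hf : forall I : {set T}, is_ideal I ->
  \sum_(q | shared q) b q * chi R q I = c + \sum_q cq q * Tog R q I.

Definition Cf (r : T) : R := if shared r then 0 else cq r.

Lemma E_trans (q : T) :
  (if shared q then b q else 0) + 2 * cq q =
  \sum_r (if cov r q || cov q r then Cf r else 0).
Proof.
have D := diff_eq Hf q.
have : \sum_r ((if shared r then b r * D1 R q r else 0) - cq r * D2 R q r) = 0.
  by rewrite sumrB -big_mkcond /= D subrr.
have -> : \sum_r ((if shared r then b r * D1 R q r else 0) - cq r * D2 R q r) =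
  \sum_r ((if r == q then (if shared q then b q else 0) + 2 * cq q else 0)
          - (if cov r q || cov q r then Cf r else 0)).
  apply: eq_bigr => r _; rewrite /D1 /D2 /Cf.
  case: eqP => [->|/eqP ne].
    have cqq : cov q q = false.
      by case cqq: (cov q q) => //; have := cov_neq cqq; rewrite eqxx.
    rewrite cqq /=; by case: (shared q); ring.
  case c1: (cov r q) => /=.
    case sh: (shared r); last ring.
    have [u1 [u2 [e1 e2 pos cr1 cr2]]] := sh_lowcov Hal sh c1.
    have := valley_b Hf e1 e2 pos cr1 cr2; rewrite sh => ->; ring.
  case c2: (cov q r) => /=; last by case: (shared r); ring.
  rewrite (F1 Hal c2); case: (shared r) => /=; ring.
rewrite sumrB.
have -> : \sum_r (if r == q then (if shared q then b q else 0) + 2 * cq q else 0) =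
    (if shared q then b q else 0) + 2 * cq q.
  by rewrite (sum_single (m0 := q)) ?eqxx // => r /negbTE ->.
by move/eqP; rewrite subr_eq0 => /eqP.
Qed.


Lemma adj_sum (q : T) (G : T -> R) :
  \sum_r (if cov r q || cov q r then G r else 0) = Pv (ext G) (val q) + ext G (val q).+1.
Proof.
have E : forall r, (if cov r q || cov q r then G r else 0) =
    (if (val q != 0%N) && (val r == (val q).-1) then G r else 0) +
    (if val r == (val q).+1 then G r else 0).
  move=> r.
  have -> : (cov r q || cov q r) = ((val r).+1 == val q) || (val r == (val q).+1).
    apply/idP/idP.
      move=> h; have : adj q r by case/orP: h => h; have := cov_adj h; case/andP.
      by rewrite /adj orbC.
    move=> h; have : adj q r by rewrite /adj orbC.
    by move/adj_cov; rewrite orbC.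
  move: (val r) (val q) => a k.
  case: k => [|k] /=.
    by case: (a == 1%N); rewrite ?add0r ?addr0.
  rewrite eqSS.
  case: eqP => [->|_]; last by rewrite add0r.
  have -> : (k == k.+2) = false by lia.
  by rewrite addr0.
rewrite (eq_bigr _ (fun r _ => E r)) big_split /= sum_val_eq.
case: (val q) => [|k] /=.
  by rewrite big1 ?add0r.
by rewrite sum_val_eq.
Qed.

Lemma all_cq0 : forall r, cq r = 0.
Proof.
pose Cn := ext Cf.
have key : forall j, Cn j = 0.
  apply: (@energy R Cn n); first by move=> j; apply: ext_out.
  move=> j hj; pose x : T := Ordinal hj.
  have ej : j = val x by [].
  rewrite ej /Cn ext_val.
  case sh: (shared x); first by rewrite /Cf sh mul0r.
  have := E_trans x; rewrite sh adj_sum -/Cn add0r => h; normval.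
  by rewrite /Cf sh -addrA -opprD -h subrr mulr0.
have Cz : forall r, Cf r = 0 by move=> r; rewrite -ext_val; apply: key.
have S0 : forall q : T, \sum_r (if cov r q || cov q r then Cf r else 0) = 0.
  by move=> q; apply: big1 => r _; rewrite Cz; case: ifP.
move=> r; case sh: (shared r); last by have := Cz r; rewrite /Cf sh.
have [u1 [u2 [e1 e2 pos h]]] := sh_class Hal sh.
case/orP: h => /andP[c1 c2]; last first.  exact: (peak_c Hf e1 e2 pos c1 c2).
have V := valley_b Hf e1 e2 pos c1 c2.
have := E_trans r; rewrite S0 V => h.
have : cq r = - cq r + 2 * cq r by ring.
by rewrite h.
Qed.

Lemma c0 : c = 0.
Proof.
have := Hf (@set0_ideal alpha).
rewrite big1; last by move=> q _; rewrite chi_out ?inE // mulr0.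
rewrite big1; last by move=> q _; rewrite all_cq0 mul0r.
by rewrite addr0 => ->.
Qed.

End Final.

Local Open Scope ring_scope.

Theorem lemma3p4 (R : realType) (alpha : seq nat) :
  is_fence_comp alpha ->
  X_lin_indep alpha R /\
  (forall f : {set 'I_(fn alpha)} -> R,
     in_span_X f -> in_AT f -> forall I, is_ideal I -> f I = 0).
Proof.
move=> Hal; split.
  move=> b hb q shq.
  have := hb _ (@Dn_ideal alpha q).
  rewrite big_mkcond /= (sum_single (m0 := q)).
    by rewrite shq chi_Dn eqxx mulr1.
  move=> r ne; case: ifP => // _; by rewrite chi_Dn (negbTE ne) mulr0.
move=> f [b hb] [_ [c [cq hc]]].
have Hf : forall I : {set 'I_(fn alpha)}, is_ideal I ->
    \sum_(q | shared q) b q * chi R q I = c + \sum_q cq q * Tog R q I.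
  by move=> I hI; rewrite -hb // hc.
move=> I hI; rewrite hc // (c0 Hal Hf) add0r big1 // => q _.
by rewrite (all_cq0 Hal Hf) mul0r.
Qed.
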